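(* Let $(\Lambda,\ell)$ be a critical map, $U$ a simply connected region with flat chart $Z:U\to\mathbb{C}$, and $z_0\in\Lambda_0$ a base vertex. For every discrete holomorphic function $f$ on $\Lambda$ in $U$, one has $df=f'\,dZ$, that is, for every edge $(x,y)$ of the diamond $\Diamond$ in $U$, $f(y)-f(x)=\frac{f'(x)+f'(y)}{2}\,(Z(y)-Z(x))$.
   Context: $\Lambda=\Gamma\sqcup\Gamma^*$ is a cellular decomposition and its Poincaré dual; the diamond $\Diamond$ has vertices $\Lambda_0$ and faces the quadrilaterals $(x,y,x',y')$ for each edge $(x,x')\in\Gamma_1$ with dual $(y,y')$; its edges join $x\in\Gamma_0$ to $y\in\Gamma^*_0$. The map is critical: with respect to a flat metric with conic singularities, each face of $\Diamond$ is realized as a Euclidean rhombus of common side length $\delta$, with diagonals the dual edges, orthogonal, forming a direct basis, and $\rho(e)=\ell(e^* )/\ell(e)$. The flat chart $Z$ is an orientation-preserving isometric coordinate on $U$ (no conic singularities inside), giving positions $Z(v)$ of the vertices. $f$ is discrete holomorphic if $f(y')-f(y)=i\rho(x,x')(f(x')-f(x))$ for dual edges $(x,x'),(y,y')$. For a function $g$ on $\Lambda_0$, the 1-form $g\cdot dZ$ on $\Diamond$ is $\int_{(u,v)}g\cdot dZ=\frac{g(u)+g(v)}{2}(Z(v)-Z(u))$. Set $\varepsilon=+1$ on $\Gamma_0$, $-1$ on $\Gamma^*_0$, $f^\dagger:=\varepsilon\bar f$, and $f'(z):=\frac{4}{\delta^2}\bigl(\int_{z_0}^z f^\dagger\,dZ\bigr)^\dagger$,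 where the integral is taken along any path in $\Diamond$ from $z_0$ to $z$ (for holomorphic $f$ it is path independent, and $f^\dagger$, $f'$ are holomorphic). *)

(* Defs.v *)
From HB Require Import structures.
From mathcomp Require Import all_boot all_order all_algebra.
From mathcomp Require Import complex.
From Stdlib Require Import Relations.

Set Implicit Arguments.
Unset Strict Implicit.
Unset Printing Implicit Defensive.

Import Order.TTheory GRing.Theory Num.Theory Num.Def.
Local Open Scope ring_scope.

(* Combinatorial data of the diamond graph of a map Lambda = Gamma + Gamma^*.
   V : vertices Lambda_0 ; F : faces of the diamond.
   [primal v] : v is in Gamma_0 (else in Gamma^*_0).
   A face t is the quadrilateral (qx t, qy t, qx' t, qy' t) = (x, y, x', y'),
   where (x, x') is an edge of Gamma with dual edge (y, y'). *)
Record quad_map (V F : Type) := QuadMap {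
  primal : V -> bool;
  qx  : F -> V;
  qy  : F -> V;
  qx' : F -> V;
  qy' : F -> V
}.

Section Diamond.
Variables (V F : Type) (D : quad_map V F).

Definition diamond_wf : Prop :=
  forall t : F, [/\ primal D (qx D t), primal D (qx' D t),
                    ~~ primal D (qy D t) & ~~ primal D (qy' D t)].

Definition in_region (U : F -> Prop) (v : V) : Prop :=
  exists2 t, U t & [\/ v = qx D t, v = qy D t, v = qx' D t | v = qy' D t].

Definition dadj (U : F -> Prop) (u v : V) : Prop :=
  exists2 t, U t &
    [\/ (u = qx D t /\ v = qy D t) \/ (v = qx D t /\ u = qy D t),
        (u = qy D t /\ v = qx' D t) \/ (v = qy D t /\ u = qx' D t),
        (u = qx' D t /\ v = qy' D t) \/ (v = qx' D t /\ u = qy' D t) |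
        (u = qy' D t /\ v = qx D t) \/ (v = qy' D t /\ u = qx D t)].

Fixpoint dpath (U : F -> Prop) (z : V) (l : seq V) : Prop :=
  match l with
  | [::] => True
  | v :: l' => dadj U z v /\ dpath U v l'
  end.

Definition face_loop (t : F) (a b c d : V) : Prop :=
  let x := qx D t in let y := qy D t in
  let x' := qx' D t in let y' := qy' D t in
  [\/ (a, b, c, d) = (x, y, x', y'), (a, b, c, d) = (y, x', y', x),
      (a, b, c, d) = (x', y', x, y) | (a, b, c, d) = (y', x, y, x')] \/
  [\/ (a, b, c, d) = (x, y', x', y), (a, b, c, d) = (y', x', y, x),
      (a, b, c, d) = (x', y, x, y') | (a, b, c, d) = (y, x, y', x')].

Inductive hstep (U : F -> Prop) : seq V -> seq V -> Prop :=
| hs_back l1 l2 u v : dadj U u v ->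
    hstep U (l1 ++ u :: l2) (l1 ++ [:: u, v, u & l2])
| hs_face l1 l2 t a b c d : U t -> face_loop t a b c d ->
    hstep U (l1 ++ a :: l2) (l1 ++ [:: a, b, c, d, a & l2]).

Definition homotopic (U : F -> Prop) : seq V -> seq V -> Prop :=
  clos_refl_sym_trans _ (hstep U).

Definition simply_connected (U : F -> Prop) : Prop :=
  [/\ exists t, U t,
      (forall u v, in_region U u -> in_region U v ->
         exists2 l, dpath U u l & last u l = v) &
      (forall z l, in_region U z -> dpath U z l -> last z l = z ->
         homotopic U (z :: l) [:: z])].

Variable R : rcfType.
Local Notation C := R[i].

(* critical flat chart Z on U: each face of U is a Euclidean rhombus of
   side delta, whose diagonals (Z x' - Z x, Z y' - Z y) are orthogonal
   and form a direct basis *)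
Definition critical_chart (U : F -> Prop) (Z : V -> C) (delta : R) : Prop :=
  0 < delta /\
  forall t, U t ->
    let x := Z (qx D t) in let y := Z (qy D t) in
    let x' := Z (qx' D t) in let y' := Z (qy' D t) in
    [/\ `|y - x| = (delta%:C)%C, `|x' - y| = (delta%:C)%C,
        `|y' - x'| = (delta%:C)%C & `|x - y'| = (delta%:C)%C] /\
    ('Re ((x' - x)^* * (y' - y)) = 0 /\ 0 < 'Im ((x' - x)^* * (y' - y))).

Definition rho (Z : V -> C) (t : F) : C :=
  `|Z (qy' D t) - Z (qy D t)| / `|Z (qx' D t) - Z (qx D t)|.

Definition dholomorphic (U : F -> Prop) (Z : V -> C) (f : V -> C) : Prop :=
  forall t, U t ->
    f (qy' D t) - f (qy D t) = 'i * rho Z t * (f (qx' D t) - f (qx D t)).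

Definition eps (v : V) : C := if primal D v then 1 else -1.

Definition dagger (f : V -> C) : V -> C := fun v => eps v * (f v)^*.

Fixpoint dintegral (g Z : V -> C) (z : V) (l : seq V) : C :=
  match l with
  | [::] => 0
  | v :: l' => (g z + g v) / 2 * (Z v - Z z) + dintegral g Z v l'
  end.

Definition fprime (Z : V -> C) (delta : R) (f : V -> C) (z0 : V) (l : seq V) : C :=
  4 / ((delta%:C)%C ^+ 2) * dagger (fun _ => dintegral (dagger f) Z z0 l) (last z0 l).

End Diamond.

(* Main.v *)
Require Import Defs.
From HB Require Import structures.
From mathcomp Require Import all_boot all_order all_algebra.
From mathcomp Require Import complex.
From mathcomp Require Import ring.
From Stdlib Require Import Relations.
Set Implicit Arguments.
Unset Strict Implicit.

Import Order.TTheory GRing.Theory Num.Theory Num.Def.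
Local Open Scope ring_scope.

Lemma cM (C : numClosedFieldType) (a b : C) : (a * b)^* = a^* * b^*.
Proof. exact: rmorphM. Qed.
Lemma cD (C : numClosedFieldType) (a b : C) : (a + b)^* = a^* + b^*.
Proof. exact: rmorphD. Qed.
Lemma cB (C : numClosedFieldType) (a b : C) : (a - b)^* = a^* - b^*.
Proof. exact: rmorphB. Qed.
Lemma cN (C : numClosedFieldType) (a : C) : (- a)^* = - a^*.
Proof. exact: rmorphN. Qed.
Lemma cV (C : numClosedFieldType) (a : C) : (a^-1)^* = (a^*)^-1.
Proof. exact: fmorphV. Qed.

Lemma rhombus (R : rcfType) (A B : R[i]) :
  'Re (A^* * B) = 0 -> 0 < 'Im (A^* * B) -> B = 'i * (`|B| / `|A|) * A.
Proof.
move=> hRe hIm.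
set w := A^* * B.
have ew : w = 'i * 'Im w by rewrite {1}[w]Crect hRe add0r.
have nw : `|w| = 'Im w by rewrite {1}ew normrM normCi mul1r ger0_norm // ltW.
have nw2 : `|w| = `|A| * `|B| by rewrite /w normrM norm_conjC.
have A0 : A != 0.
  apply/eqP => A0; move: hIm; rewrite -nw /w A0 rmorph0 mul0r normr0 ltxx //.
have nA0 : `|A| != 0 by rewrite normr_eq0.
have key : `|A| ^+ 2 * B = 'i * (`|A| * `|B|) * A.
  rewrite normCK; transitivity (A * w); first by rewrite /w mulrA.
  rewrite ew -nw nw2; ring.
apply: (mulfI (expf_neq0 2 nA0)); rewrite key; field.
exact: nA0.
Qed.

Section Aux.
Variables (V F : Type) (D : quad_map V F) (R : rcfType).
Local Notation C := R[i].

Lemma dint_cat (g Z : V -> C) z l1 l2 :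
  dintegral g Z z (l1 ++ l2) = dintegral g Z z l1 + dintegral g Z (last z l1) l2.
Proof.
elim: l1 z => [|v l1 IH] z /=; first by rewrite add0r.
by rewrite IH addrA.
Qed.

Lemma dpath_cat U z l1 l2 :
  dpath D U z (l1 ++ l2) <-> dpath D U z l1 /\ dpath D U (last z l1) l2.
Proof.
elim: l1 z => [|v l1 IH] z /=; first tauto.
rewrite IH; tauto.
Qed.

Lemma dadj_sym U u v : dadj D U u v -> dadj D U v u.
Proof.
case=> t Ut H; exists t => //.
case: H => [[]|[]|[]|[]] H.
- by apply: Or41; right.
- by apply: Or41; left.
- by apply: Or42; right.
- by apply: Or42; left.
- by apply: Or43; right.
- by apply: Or43; left.
- by apply: Or44; right.
- by apply: Or44; left.
Qed.

Lemma dpath_rev U (g Z : V -> C) z l : dpath D U z l ->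
  exists l', [/\ dpath D U (last z l) l', last (last z l) l' = z &
    dintegral g Z (last z l) l' = - dintegral g Z z l].
Proof.
elim: l z => [|v l IH] z /=.
  by move=> _; exists [::]; rewrite oppr0.
case=> Hzv Hp; have [l' [Hp' Hl' Hi']] := IH v Hp.
exists (l' ++ [:: z]); split.
- apply/dpath_cat; split => //; rewrite Hl' /=; split => //; exact: dadj_sym.
- by rewrite last_cat.
- rewrite dint_cat Hi' Hl' /= addr0; ring.
Qed.

Definition Ilist (g Z : V -> C) (s : seq V) : C :=
  if s is z :: l then dintegral g Z z l else 0.

Lemma Ilist_split g Z l1 a l2 :
  Ilist g Z (l1 ++ a :: l2) = Ilist g Z (l1 ++ [:: a]) + dintegral g Z a l2.
Proof.
case: l1 => [|h l1] /=; first by rewrite add0r.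
by rewrite -cat_rcons -cats1 dint_cat last_cat.
Qed.

Definition face_closed (U : F -> Prop) (g Z : V -> C) :=
  forall t, U t -> forall a b c d, face_loop D t a b c d ->
    dintegral g Z a [:: b; c; d; a] = 0.

Lemma hstep_int (U : F -> Prop) (g Z : V -> C) (s1 s2 : seq V) : face_closed U g Z -> hstep D U s1 s2 ->
  Ilist g Z s1 = Ilist g Z s2.
Proof.
move=> Hf; case=> [l1 l2 u v _ | l1 l2 t a b c d Ut Hl].
  rewrite (Ilist_split g Z l1 u l2) (Ilist_split g Z l1 u [:: v, u & l2]) /=; ring.
rewrite (Ilist_split g Z l1 a l2) (Ilist_split g Z l1 a [:: b, c, d, a & l2]).
have -> : [:: b, c, d, a & l2] = [:: b; c; d; a] ++ l2 by [].
by rewrite dint_cat (Hf t Ut a b c d Hl) add0r.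
Qed.

Lemma homotopic_int (U : F -> Prop) (g Z : V -> C) (s1 s2 : seq V) : face_closed U g Z -> homotopic D U s1 s2 ->
  Ilist g Z s1 = Ilist g Z s2.
Proof.
move=> Hf; elim=> [x y H|x|x y _ IH|x y z _ IH1 _ IH2].
- exact: hstep_int H.
- by [].
- by [].
- by rewrite IH1.
Qed.

End Aux.

Lemma face_closed_dagger (V F : Type) (D : quad_map V F) (R : rcfType)
  (U : F -> Prop) (Z f : V -> R[i]) (delta : R) :
  diamond_wf D -> critical_chart D U Z delta -> dholomorphic D U Z f ->
  face_closed D U (dagger D f) Z.
Proof.
move=> wf [_ cc] hol t Ut a b c d Hl.
have [px px' py py'] := wf t.
have /= [_ [hRe hIm]] := cc t Ut.
have hB := rhombus hRe hIm.
have hf := hol t Ut.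
have eZ : Z (qy' D t) = Z (qy D t) + 'i * rho D Z t * (Z (qx' D t) - Z (qx D t)).
  by rewrite -[LHS](subrK (Z (qy D t))) hB /rho addrC.
have cr : (rho D Z t)^* = rho D Z t.
  by rewrite /rho conj_Creal // realM ?realV ?normr_real.
have ef : (f (qy' D t))^* = (f (qy D t))^* + - 'i * rho D Z t * ((f (qx' D t))^* - (f (qx D t))^*).
  rewrite -[f (qy' D t)](subrK (f (qy D t))) hf cD cM cB cM cr conjCi.
  by rewrite addrC.
case: Hl => [[]|[]] [-> -> -> ->]; rewrite /= /dagger /eps ?px ?px' (negbTE py) (negbTE py') eZ ef; ring.
Qed.


Lemma c1 (C : numClosedFieldType) : (1 : C)^* = 1.
Proof. exact: rmorph1. Qed.

Lemma conj_step (C : numClosedFieldType) (a b c u : C) :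
  (a + (b + c) / 2 * u)^* = a^* + (b^* + c^*) / 2 * u^*.
Proof. by rewrite cD cM cM cD cV conjC_nat. Qed.

Lemma eps_conj (V F : Type) (D : quad_map V F) (R : rcfType) (v : V) :
  (@eps V F D R v)^* = @eps V F D R v.
Proof. by rewrite /eps; case: (primal D v); rewrite ?cN c1. Qed.

Lemma adj_facts (V F : Type) (D : quad_map V F) (R : rcfType)
  (U : F -> Prop) (Z : V -> R[i]) (delta : R) x y :
  diamond_wf D -> critical_chart D U Z delta -> dadj D U x y ->
  primal D x = ~~ primal D y /\ `|Z y - Z x| = (delta%:C)%C.
Proof.
move=> wf [_ cc] [t Ut H].
have [px px' py py'] := wf t.
have /= [[n1 n2 n3 n4] _] := cc t Ut.
case: H => [[]|[]|[]|[]] [-> ->]; rewrite ?px ?px' ?(negbTE py) ?(negbTE py');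
  split => //; by rewrite ?n1 ?n2 ?n3 ?n4 // distrC ?n1 ?n2 ?n3 ?n4.
Qed.

Theorem mainTheorem13 (R : rcfType) (V F : Type) (D : quad_map V F)
  (U : F -> Prop) (Z : V -> R[i]) (delta : R) (z0 : V) (f : V -> R[i]) :
  diamond_wf D ->
  critical_chart D U Z delta ->
  simply_connected D U ->
  in_region D U z0 ->
  dholomorphic D U Z f ->
  forall x y : V, dadj D U x y ->
  forall px py : seq V,
    dpath D U z0 px -> last z0 px = x ->
    dpath D U z0 py -> last z0 py = y ->
    f y - f x =
      (fprime D Z delta f z0 px + fprime D Z delta f z0 py) / 2 * (Z y - Z x).
Proof.
move=> wf cc [_ _ sc] z0U hol x y hxy px py dpx lpx dpy lpy.
have Hf := face_closed_dagger wf cc hol.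
set g := dagger D f.
have [l' [dl' ll' il']] := @dpath_rev _ _ D R U g Z z0 py dpy.
rewrite lpy in dl' ll' il'.
have dL : dpath D U z0 (px ++ y :: l').
  by apply/dpath_cat; split => //; rewrite lpx /=; split.
have lL : last z0 (px ++ y :: l') = z0 by rewrite last_cat lpx /= ll'.
have hom := homotopic_int Hf (sc z0 _ z0U dL lL).
rewrite /= dint_cat lpx /= il' in hom.
set Gx := dintegral g Z z0 px in hom *.
set Gy := dintegral g Z z0 py in hom *.
have eGy : Gy = Gx + (g x + g y) / 2 * (Z y - Z x).
  have e : Gy - (Gx + (g x + g y) / 2 * (Z y - Z x)) =
    - (Gx + ((dagger D f x + dagger D f y) / 2 * (Z y - Z x) - Gy)) by rewrite /g; ring.
  by move: e; rewrite hom oppr0 => /eqP; rewrite subr_eq0 => /eqP.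
have [pxy nu] := adj_facts wf cc hxy.
have [d0 _] := cc.
have dC0 : (delta%:C)%C != 0 :> R[i].
  by rewrite (_ : 0 = (0%:C)%C) // eq_complex /= eqxx andbT gt_eqF.
have u0 : Z y - Z x != 0 by rewrite -normr_eq0 nu.
have cu : (Z y - Z x)^* = (delta%:C)%C ^+ 2 / (Z y - Z x).
  by rewrite -nu normCK mulrC mulKf.
rewrite /fprime lpx lpy /dagger -/Gx -/Gy eGy conj_step cu /g /dagger !cM !conjCK !eps_conj.
rewrite /eps pxy; case: (primal D y) => /=; field.
all: by apply/andP; split; [exact: u0 | exact: dC0].
Qed.
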